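(* Let $Q$ be a topological $k$-quandle, let ${}^v_v\sigma$ be a $k$-colored $n$-braid whose top and bottom color tuples are both $v\in\{1,\dots,k\}^n$, let $L_C=\overline{{}^v_v\sigma}$ be its closure and $D_C$ the closed-braid diagram of $L_C$. Then $\mathrm{Hom}(F(D_C),Q)$ is homeomorphic to $\hat{J}_Q(L_C)$, the space of fixed points of the map ${}^v_v\sigma:Q^n\to Q^n$; explicitly, the map $f\mapsto (f(y_1),\dots,f(y_n))$, where $y_1,\dots,y_n$ are the arcs at the top ends of the braid from left to right, is a homeomorphism $\mathrm{Hom}(F(D_C),Q)\to\hat{J}_Q(L_C)$.
   Context: A quandle is a set with a binary operation $\triangleright$ such that $x\triangleright x=x$, each right translation $x\mapsto x\triangleright y$ is a bijection (inverse written $x\mapsto x\triangleright^{-1}y$), and $(x\triangleright y)\triangleright z=(x\triangleright z)\triangleright(y\triangleright z)$. A $k$-quandle is a set with operations $\triangleright_1,\dots,\triangleright_k$, each making it a quandle, with $(x\triangleright_i y)\triangleright_j z=(x\triangleright_j z)\triangleright_i(y\triangleright_j z)$ for all $i,j,x,y,z$. A topological $k$-quandle is a $k$-quandle with a topology making all $\triangleright_i,\triangleright_i^{-1}:Q\times Q\to Q$ continuous. A $k$-colored $n$-braid is an $n$-strand braid (oriented top to bottom) with each strand colored by one of $1,\dots,k$, all colors used; ${}^v_w\sigma$ denotes such a braid with colors $v$ at the top and $w$ at the bottom (read left to right). For $v=(v_1,\dots,v_n)$ and $w$ obtained from $v$ by swapping entries $i,i+1$, the elementary colored braid ${}^v_w\sigma_i$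 (strand $i$ crossing strand $i+1$ positively) induces the homeomorphism $Q^n\to Q^n$ given by $x\mapsto x'$ with $x'_j=x_j$ for $j\ne i,i+1$, $x'_i=x_{i+1}$, $x'_{i+1}=x_i\triangleright_{v_{i+1}}x_{i+1}$; the inverse elementary braid ${}^w_v\sigma_i^{-1}$ induces the inverse homeomorphism. Every colored braid is a product ${}^{v^1}_{v^2}\sigma_{i_1}^{\pm}\cdots{}^{v^m}_{v^{m+1}}\sigma_{i_m}^{\pm}$ of elementary colored braids, and it induces the composite map ${}^{v^m}_{v^{m+1}}\sigma_{i_m}^{\pm}\circ\cdots\circ{}^{v^1}_{v^2}\sigma_{i_1}^{\pm}$. The closure of ${}^v_v\sigma$ joins each top end to the bottom end in the same position, giving a $k$-colored link (oriented link with components colored, considered up to orientation- and color-preserving isotopy). For a diagram $D_C$ with arcs $x_1,\dots,x_N$, $F(D_C)$ is the $k$-quandle generated by the arcs modulo crossing relations: at a crossing with over-arc $y$, incoming under-arc $x$, outgoing under-arc $z$, over-strand color $j$, $z=x\triangleright_j y$ (positive) or $z=x\triangleright_j^{-1}y$ (negative). $\mathrm{Hom}(F(D_C),Q)$ is the set of $k$-quandle homomorphisms $F(D_C)\to Q$, with $F(D_C)$ discrete and $\mathrm{Hom}$ given the compact-open topology; $\hat{J}_Q(L_C)\subseteq Q^n$ has the subspace topology. *)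

(* Defs.v *)
From HB Require Import structures.
From mathcomp Require Import all_boot all_order.
From mathcomp Require Import boolp classical_sets functions.
From mathcomp Require Import topology.

Set Implicit Arguments.
Unset Strict Implicit.
Unset Printing Implicit Defensive.

Local Open Scope classical_set_scope.

(** * Topological k-quandles.  Colours 1..k are represented by 'I_k.   *)

Definition is_kquandle (k : nat) (Q : Type)
    (op opinv : 'I_k -> Q -> Q -> Q) : Prop :=
  [/\ (forall i x, op i x x = x),
      (forall i x y, opinv i (op i x y) y = x),
      (forall i x y, op i (opinv i x y) y = x) &
      (forall i j x y z, op j (op i x y) z = op i (op j x z) (op j y z))].

Definition is_topological_kquandle (k : nat) (Q : topologicalType)
    (op opinv : 'I_k -> Q -> Q -> Q) : Prop :=
  is_kquandle op opinv /\
  forall i : 'I_k,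
    continuous (fun p : Q * Q => op i p.1 p.2) /\
    continuous (fun p : Q * Q => opinv i p.1 p.2).

Definition is_khom (k : nat) (F Q : Type)
    (opF : 'I_k -> F -> F -> F) (opQ : 'I_k -> Q -> Q -> Q) (f : F -> Q) : Prop :=
  forall i a b, f (opF i a b) = opQ i (f a) (f b).

Inductive eqclos (T : Type) (R : T -> T -> Prop) : T -> T -> Prop :=
| eqclos_step a b : R a b -> eqclos R a b
| eqclos_refl a : eqclos R a a
| eqclos_sym a b : eqclos R a b -> eqclos R b a
| eqclos_trans a b c : eqclos R a b -> eqclos R b c -> eqclos R a c.

Definition cquot (T : Type) (E : T -> T -> Prop) : Type :=
  {A : set T | exists t, A = E t}.

HB.instance Definition _ (T : Type) (E : T -> T -> Prop) :=
  gen_eqMixin (cquot E).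
HB.instance Definition _ (T : Type) (E : T -> T -> Prop) :=
  gen_choiceMixin (cquot E).

Definition cclass (T : Type) (E : T -> T -> Prop) (t : T) : cquot E :=
  exist _ (E t) (ex_intro _ t erefl).

Definition crepr (T : Type) (E : T -> T -> Prop) (A : cquot E) : T :=
  proj1_sig (cid (proj2_sig A)).

Inductive kterm (k : nat) (G : Type) : Type :=
| KGen of G
| KOp of 'I_k & kterm k G & kterm k G
| KOpInv of 'I_k & kterm k G & kterm k G.

Arguments KGen {k G}.
Arguments KOp {k G}.
Arguments KOpInv {k G}.

Inductive kcong (k : nat) (G : Type) (R : kterm k G -> kterm k G -> Prop) :
    kterm k G -> kterm k G -> Prop :=
| kc_rel a b : R a b -> kcong R a b
| kc_refl a : kcong R a a
| kc_sym a b : kcong R a b -> kcong R b a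
| kc_trans a b c : kcong R a b -> kcong R b c -> kcong R a c
| kc_op i a a' b b' : kcong R a a' -> kcong R b b' ->
    kcong R (KOp i a b) (KOp i a' b')
| kc_opinv i a a' b b' : kcong R a a' -> kcong R b b' ->
    kcong R (KOpInv i a b) (KOpInv i a' b')
| kc_idem i a : kcong R (KOp i a a) a
| kc_inv1 i a b : kcong R (KOpInv i (KOp i a b) b) a
| kc_inv2 i a b : kcong R (KOp i (KOpInv i a b) b) a
| kc_dist i j a b c :
    kcong R (KOp j (KOp i a b) c) (KOp i (KOp j a c) (KOp j b c)).

Definition kpres (k : nat) (G : Type) (R : kterm k G -> kterm k G -> Prop) : Type :=
  cquot (kcong R).

Definition kpres_op (k : nat) (G : Type) (R : kterm k G -> kterm k G -> Prop)
    (i : 'I_k) (a b : kpres R) : kpres R :=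
  cclass (kcong R) (KOp i (crepr a) (crepr b)).

Definition kpres_gen (k : nat) (G : Type) (R : kterm k G -> kterm k G -> Prop)
    (g : G) : kpres R :=
  cclass (kcong R) (KGen g).

(** A braid word is a sequence of letters (i, s) : nat * bool, meaning
   sigma_i (0-based: strands at positions i and i+1, i.e. sigma_{i+1} in the
   paper's 1-based numbering) if s = true and sigma_i^{-1} if s = false. *)

Definition braid_letter := (nat * bool)%type.

Definition valid_word (n : nat) (w : seq braid_letter) : bool :=
  all (fun l => l.1.+1 < n) w.

Definition swapc (A : Type) (n : nat) (i : nat) (c : 'I_n -> A) : 'I_n -> A :=
  fun j => if val j == i then c (insubd j i.+1)
           else if val j == i.+1 then c (insubd j i) else c j.

Definition colors_at (k n : nat) (v : 'I_n -> 'I_k) (w : seq braid_letter)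
    (t : nat) : 'I_n -> 'I_k :=
  foldl (fun c l => swapc l.1 c) v (take t w).

Definition braid_step (k : nat) (Q : Type) (op opinv : 'I_k -> Q -> Q -> Q)
    (n : nat) (c : 'I_n -> 'I_k) (l : braid_letter) (x : 'I_n -> Q) : 'I_n -> Q :=
  fun j =>
    let i := l.1 in
    if l.2 then
      (if val j == i then x (insubd j i.+1)
       else if val j == i.+1 then op (c j) (x (insubd j i)) (x j)
       else x j)
    else
      (* inverse of the positive crossing with top colours swap(c):
         y'_i = y_{i+1} |>^{-1}_{c_i} y_i,  y'_{i+1} = y_i *)
      (if val j == i then opinv (c j) (x (insubd j i.+1)) (x j)
       else if val j == i.+1 then x (insubd j i)
       else x j).

Fixpoint braid_map (k : nat) (Q : Type) (op opinv : 'I_k -> Q -> Q -> Q)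
    (n : nat) (c : 'I_n -> 'I_k) (w : seq braid_letter) (x : 'I_n -> Q)
    : 'I_n -> Q :=
  match w with
  | [::] => x
  | l :: w' => braid_map op opinv (swapc l.1 c) w' (braid_step op opinv c l x)
  end.

Definition fixed_points (k : nat) (Q : Type) (op opinv : 'I_k -> Q -> Q -> Q)
    (n : nat) (v : 'I_n -> 'I_k) (w : seq braid_letter) : set ('I_n -> Q) :=
  [set x | braid_map op opinv v w x = x].

(** Segments: (t, j) is the piece of the strand at position j between the
   t-th and (t+1)-th crossing (level t, 0 <= t <= size w); level size w is
   joined to level 0 by the closure.  Arcs are the classes of segments under
   the equivalence generated by "continues without passing under". *)

Definition segment (n : nat) (w : seq braid_letter) : Type :=
  ('I_(size w).+1 * 'I_n)%type.

Definition letter_at (w : seq braid_letter) (t : nat) : braid_letter :=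
  nth (0, true) w t.

Inductive strand_cont (n : nat) (w : seq braid_letter) :
    segment n w -> segment n w -> Prop :=
| sc_straight (t : nat) (j : 'I_n) : t < size w ->
    val j != (letter_at w t).1 -> val j != (letter_at w t).1.+1 ->
    strand_cont (inord t, j) (inord t.+1, j)
| sc_over_pos (t : nat) (j j' : 'I_n) : t < size w ->
    (letter_at w t).2 = true ->
    val j = (letter_at w t).1 -> val j' = (letter_at w t).1.+1 ->
    strand_cont (inord t, j') (inord t.+1, j)
| sc_over_neg (t : nat) (j j' : 'I_n) : t < size w ->
    (letter_at w t).2 = false ->
    val j = (letter_at w t).1 -> val j' = (letter_at w t).1.+1 ->
    strand_cont (inord t, j) (inord t.+1, j')
| sc_close (j : 'I_n) : strand_cont (ord_max, j) (ord0, j).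

Definition arc (n : nat) (w : seq braid_letter) : Type :=
  cquot (eqclos (@strand_cont n w)).

Definition arc_of (n : nat) (w : seq braid_letter) (s : segment n w) : arc n w :=
  cclass (eqclos (@strand_cont n w)) s.

(** Crossing relations of D_C: z = x |>_j y (positive), z = x |>^{-1}_j y
    (negative), y over-arc of colour j, x incoming and z outgoing under-arc. *)
Inductive crossing_rel (k n : nat) (v : 'I_n -> 'I_k) (w : seq braid_letter) :
    kterm k (arc n w) -> kterm k (arc n w) -> Prop :=
| cr_pos (t : nat) (j j' : 'I_n) : t < size w ->
    (letter_at w t).2 = true ->
    val j = (letter_at w t).1 -> val j' = (letter_at w t).1.+1 ->
    crossing_rel v
      (KGen (arc_of (inord t.+1, j')))
      (KOp (colors_at v w t j') (KGen (arc_of (inord t, j)))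
                                (KGen (arc_of (inord t, j'))))
| cr_neg (t : nat) (j j' : 'I_n) : t < size w ->
    (letter_at w t).2 = false ->
    val j = (letter_at w t).1 -> val j' = (letter_at w t).1.+1 ->
    crossing_rel v
      (KGen (arc_of (inord t.+1, j)))
      (KOpInv (colors_at v w t j) (KGen (arc_of (inord t, j')))
                                  (KGen (arc_of (inord t, j)))).

Definition fund_kquandle (k n : nat) (v : 'I_n -> 'I_k) (w : seq braid_letter)
  : Type := kpres (@crossing_rel k n v w).

Definition fund_op (k n : nat) (v : 'I_n -> 'I_k) (w : seq braid_letter) :
  'I_k -> fund_kquandle v w -> fund_kquandle v w -> fund_kquandle v w :=
  @kpres_op k (arc n w) (@crossing_rel k n v w).

Definition top_arc (k n : nat) (v : 'I_n -> 'I_k) (w : seq braid_letter)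
    (j : 'I_n) : fund_kquandle v w :=
  kpres_gen (@crossing_rel k n v w) (arc_of ((ord0 : 'I_(size w).+1), j)).

Definition fund_hom_space (k : nat) (Q : topologicalType)
    (op : 'I_k -> Q -> Q -> Q) (n : nat) (v : 'I_n -> 'I_k)
    (w : seq braid_letter)
  : set {compact-open, discrete_topology (fund_kquandle v w) -> Q} :=
  [set f | is_khom (@fund_op k n v w) op f].

Definition homeomorphism_on (X Y : topologicalType) (A : set X) (B : set Y)
    (f : X -> Y) : Prop :=
  [/\ set_bij A B f, {within A, continuous f} &
      exists g : Y -> X, {within B, continuous g} /\
        (forall y, B y -> A (g y) /\ f (g y) = y)].

(* Main.v *)
Require Import Defs.
From HB Require Import structures.
From mathcomp Require Import all_boot all_order.
From mathcomp Require Import boolp classical_sets functions.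
From mathcomp Require Import topology.

Local Open Scope classical_set_scope.
Set Implicit Arguments.
Unset Strict Implicit.

Section Quot.
Variables (T : Type) (E : T -> T -> Prop).
Hypothesis Erefl : forall a, E a a.
Hypothesis Esym : forall a b, E a b -> E b a.
Hypothesis Etrans : forall a b c, E a b -> E b c -> E a c.

Lemma cquot_eq (A B : cquot E) : proj1_sig A = proj1_sig B -> A = B.
Proof.
case: A => A pA; case: B => B pB /= e; subst B.
by congr exist; apply: Prop_irrelevance.
Qed.

Lemma crepr_class s : E s (crepr (cclass E s)).
Proof.
rewrite /crepr; case: cid => t /= H; rewrite H; exact: Erefl.
Qed.

Lemma class_eq a b : E a b -> cclass E a = cclass E b.
Proof.
move=> Hab; apply: cquot_eq => /=; apply/funext => c; apply/propext; split.
- by move=> Hac; apply: Etrans (Esym Hab) Hac.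
- by move=> Hbc; apply: Etrans Hab Hbc.
Qed.

Lemma class_repr (A : cquot E) : cclass E (crepr A) = A.
Proof.
apply: cquot_eq; rewrite /crepr /=; case: cid => t /= H.
by rewrite H.
Qed.
End Quot.
Section Terms.
Variables (k : nat) (Q : Type) (op opinv : 'I_k -> Q -> Q -> Q).
Hypothesis HQ : is_kquandle op opinv.
Variables (G : Type).

Fixpoint teval (gv : G -> Q) (t : kterm k G) : Q :=
  match t with
  | KGen g => gv g
  | KOp i a b => op i (teval gv a) (teval gv b)
  | KOpInv i a b => opinv i (teval gv a) (teval gv b)
  end.

Lemma teval_cong (R : kterm k G -> kterm k G -> Prop) gv :
  (forall a b, R a b -> teval gv a = teval gv b) ->
  forall a b, kcong R a b -> teval gv a = teval gv b.
Proof.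
case: HQ => H1 H2 H3 H4 HR a b; elim => /=.
- exact: HR.
- by [].
- by move=> ? ? _ ->.
- by move=> ? ? ? _ -> _ ->.
- by move=> ? ? ? ? ? _ -> _ ->.
- by move=> ? ? ? ? ? _ -> _ ->.
- by move=> ? ?; rewrite H1.
- by move=> ? ? ?; rewrite H2.
- by move=> ? ? ?; rewrite H3.
- by move=> ? ? ? ? ?; rewrite H4.
Qed.

Lemma kcong_refl R a : @kcong k G R a a. Proof. exact: kc_refl. Qed.
Lemma kcong_sym R a b : @kcong k G R a b -> kcong R b a. Proof. exact: kc_sym. Qed.
Lemma kcong_trans R a b c : @kcong k G R a b -> kcong R b c -> kcong R a c.
Proof. exact: kc_trans. Qed.

Section Hom.
Variable R : kterm k G -> kterm k G -> Prop.
Variable f : kpres R -> Q.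
Hypothesis fhom : is_khom (@kpres_op k G R) op f.

Let E := kcong R.
Let cl := cclass E.

Lemma kclass_eq a b : kcong R a b -> cl a = cl b.
Proof. exact: (class_eq (@kcong_sym R) (@kcong_trans R)). Qed.

Lemma crepr_cl a : kcong R a (crepr (cl a)).
Proof. exact: (crepr_class (@kcong_refl R)). Qed.

Lemma cl_op i a b : cl (KOp i a b) = kpres_op i (cl a) (cl b).
Proof.
rewrite /kpres_op; apply: kclass_eq; apply: kc_op; exact: crepr_cl.
Qed.

Lemma hom_teval t : f (cl t) = teval (fun g => f (kpres_gen R g)) t.
Proof.
case: HQ => H1 H2 H3 H4.
elim: t => [g|i a IHa b IHb|i a IHa b IHb] //=.
- by rewrite cl_op fhom IHa IHb.
- have e : kpres_op i (cl (KOpInv i a b)) (cl b) = cl a.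
    by rewrite -cl_op; apply: kclass_eq; apply: kc_inv2.
  have := congr1 f e; rewrite fhom => e2.
  by rewrite -IHa -IHb -e2 H2.
Qed.
End Hom.
End Terms.
Lemma insubd_eq (n : nat) (j j' : 'I_n) (m : nat) : val j' = m -> insubd j m = j'.
Proof.
move=> e; apply: val_inj; rewrite val_insubd -e ltn_ord //.
Qed.

Section Braid.
Variables (k : nat) (Q : Type) (op opinv : 'I_k -> Q -> Q -> Q).
Variables (n : nat) (v : 'I_n -> 'I_k) (w : seq braid_letter).

Lemma braid_map_rcons (c : 'I_n -> 'I_k) (w0 : seq braid_letter) l x :
  braid_map op opinv c (rcons w0 l) x =
  braid_step op opinv (foldl (fun c l => swapc l.1 c) c w0) l (braid_map op opinv c w0 x).
Proof. by elim: w0 c x => [|l0 w0 IH] c x //=. Qed.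

Lemma braid_map_take t x : t < size w ->
  braid_map op opinv v (take t.+1 w) x =
  braid_step op opinv (colors_at v w t) (letter_at w t) (braid_map op opinv v (take t w) x).
Proof. by move=> lt; rewrite (take_nth (0, true) lt) braid_map_rcons. Qed.

Definition segval (x : 'I_n -> Q) (s : segment n w) : Q :=
  braid_map op opinv v (take s.1 w) x s.2.

Lemma segval_t x t j : t <= size w ->
  segval x (inord t, j) = braid_map op opinv v (take t w) x j.
Proof. by move=> le; rewrite /segval /= inordK. Qed.

Lemma segval_S x t j : t < size w ->
  segval x (inord t.+1, j) =
  braid_step op opinv (colors_at v w t) (letter_at w t) (braid_map op opinv v (take t w) x) j.
Proof. by move=> lt; rewrite segval_t // braid_map_take. Qed.

Lemma segval_cont x : braid_map op opinv v w x = x ->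
  forall s1 s2, strand_cont s1 s2 -> segval x s1 = segval x s2.
Proof.
move=> fx s1 s2; case.
- move=> t j lt h1 h2; rewrite [RHS](segval_S x j lt) [LHS](segval_t x j (ltnW lt)).
  rewrite /braid_step; case: (letter_at w t).2.
  + by rewrite (negbTE h1) (negbTE h2).
  + by rewrite (negbTE h1) (negbTE h2).
- move=> t j j' lt sg e1 e2.
  rewrite [RHS](segval_S x j lt) [LHS](segval_t x j' (ltnW lt)).
  rewrite -e1 in e2; rewrite /braid_step sg -e1 eqxx (insubd_eq j e2) //.
- move=> t j j' lt sg e1 e2.
  rewrite [RHS](segval_S x j' lt) [LHS](segval_t x j (ltnW lt)).
  rewrite /braid_step sg e2 -e1 eqxx.
  have -> : ((val j).+1 == val j) = false by elim: (val j).
  by rewrite (@insubd_eq n j' j (val j) erefl).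
- move=> j; rewrite /segval /= take_size fx take0 //.
Qed.

Lemma segval_eqclos x : braid_map op opinv v w x = x ->
  forall s1 s2, eqclos (@strand_cont n w) s1 s2 -> segval x s1 = segval x s2.
Proof.
move=> fx s1 s2; elim => [a b /(segval_cont fx)|a|a b _ ->|a b c _ -> _ ->] //.
Qed.
End Braid.
Section Fund.
Variables (k : nat) (Q : Type) (op opinv : 'I_k -> Q -> Q -> Q).
Hypothesis HQ : is_kquandle op opinv.
Variables (n : nat) (v : 'I_n -> 'I_k) (w : seq braid_letter).
Hypothesis Hw : valid_word n w.

Let R := @crossing_rel k n v w.
Let SE := eqclos (@strand_cont n w).

Lemma eqclos_symm a b : SE a b -> SE b a. Proof. exact: eqclos_sym. Qed.
Lemma eqclos_tr a b c : SE a b -> SE b c -> SE a c. Proof. exact: eqclos_trans. Qed.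

Lemma arc_of_cont (s1 s2 : segment n w) : strand_cont s1 s2 -> arc_of s1 = arc_of s2.
Proof.
move=> h; exact: (class_eq eqclos_symm eqclos_tr (eqclos_step h)).
Qed.

Definition arcval (x : 'I_n -> Q) (a : Defs.arc n w) : Q := segval op opinv v x (crepr a).

Lemma arcval_of x (s : segment n w) : braid_map op opinv v w x = x -> arcval x (arc_of s) = segval op opinv v x s.
Proof.
move=> fx; rewrite /arcval; symmetry; apply: segval_eqclos => //.
exact: (crepr_class (@eqclos_refl _ _)).
Qed.

Definition Gmap (x : 'I_n -> Q) (a : fund_kquandle v w) : Q :=
  teval op opinv (arcval x) (crepr a).

Lemma letter_ok t : t < size w -> (letter_at w t).1.+1 < n.
Proof. move=> lt; exact: (allP Hw) _ (mem_nth (0, true) lt). Qed.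

Lemma Gmap_rel x : braid_map op opinv v w x = x ->
  forall a b, R a b -> teval op opinv (arcval x) a = teval op opinv (arcval x) b.
Proof.
move=> fx a b; case.
- move=> t j j' lt sg e1 e2 /=; rewrite !arcval_of //.
  rewrite [LHS](segval_S op opinv v x j' lt) (segval_t op opinv v x j (ltnW lt)).
  rewrite (segval_t op opinv v x j' (ltnW lt)).
  rewrite /braid_step sg e2.
  have -> : ((letter_at w t).1.+1 == (letter_at w t).1) = false by elim: (letter_at w t).1.
  by rewrite eqxx -e1 (@insubd_eq n j' j (val j) erefl).
- move=> t j j' lt sg e1 e2 /=; rewrite !arcval_of //.
  rewrite [LHS](segval_S op opinv v x j lt) (segval_t op opinv v x j (ltnW lt)).
  rewrite (segval_t op opinv v x j' (ltnW lt)).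
  rewrite /braid_step sg e1 eqxx.
  by rewrite (insubd_eq j e2).
Qed.

Lemma Gmap_hom x : braid_map op opinv v w x = x -> is_khom (@fund_op k n v w) op (Gmap x).
Proof.
move=> fx i a b; rewrite /Gmap /fund_op /kpres_op.
have := crepr_cl R (KOp i (crepr a) (crepr b)).
move/(teval_cong HQ (Gmap_rel fx)) => <- //.
Qed.

Lemma Gmap_top x : braid_map op opinv v w x = x -> forall j, Gmap x (@top_arc k n v w j) = x j.
Proof.
move=> fx j; rewrite /Gmap /top_arc /kpres_gen.
have := crepr_cl R (KGen (arc_of ((ord0 : 'I_(size w).+1), j))).
move/(teval_cong HQ (Gmap_rel fx)) => <- /=.
by rewrite arcval_of // /segval /= take0.
Qed.

Section HomSide.
Variable f : fund_kquandle v w -> Q.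
Hypothesis fhom : is_khom (@fund_op k n v w) op f.
Let x0 := fun j => f (@top_arc k n v w j).

Lemma f_rel a b : R a b -> f (cclass (kcong R) a) = f (cclass (kcong R) b).
Proof. by move=> h; rewrite (kclass_eq (kc_rel h)). Qed.

Lemma f_gen_arc (s1 s2 : segment n w) : strand_cont s1 s2 ->
  f (kpres_gen R (arc_of s1)) = f (kpres_gen R (arc_of s2)).
Proof. by move=> h; rewrite (arc_of_cont h). Qed.

Lemma hom_gen t : t <= size w -> forall j,
  f (kpres_gen R (arc_of (inord t, j))) = braid_map op opinv v (take t w) x0 j.
Proof.
elim: t => [_ j|t IH lt j].
  have -> : (inord 0 : 'I_(size w).+1) = ord0 by apply: val_inj; rewrite /= inordK.
  by rewrite take0.
have lt' : t < size w by [].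
have IH' := IH (ltnW lt'). 
rewrite braid_map_take //.
have Hi := letter_ok lt'.
set l := letter_at w t in Hi *.
set X := braid_map op opinv v (take t w) x0.
pose ji : 'I_n := Ordinal (ltnW Hi).
pose ji1 : 'I_n := Ordinal Hi.
rewrite /braid_step.
case sg: l.2.
- case: (eqVneq (val j) l.1) => [ej|nj].
    rewrite -(f_gen_arc (@sc_over_pos n w t j ji1 lt' sg ej erefl)) IH'.
    by rewrite (@insubd_eq n j ji1 l.1.+1 erefl).
  case: (eqVneq (val j) l.1.+1) => [ej'|nj'].
    rewrite /kpres_gen (f_rel (@cr_pos k n v w t ji j lt' sg erefl ej')).
    rewrite (hom_teval HQ fhom) /=.
    rewrite -!/(kpres_gen R _) !IH'.
    by rewrite (@insubd_eq n j ji l.1 erefl).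
  by rewrite -(f_gen_arc (@sc_straight n w t j lt' nj nj')) IH'.
- case: (eqVneq (val j) l.1) => [ej|nj].
    rewrite /kpres_gen (f_rel (@cr_neg k n v w t j ji1 lt' sg ej erefl)).
    rewrite (hom_teval HQ fhom) /=.
    rewrite -!/(kpres_gen R _) !IH'.
    by rewrite (@insubd_eq n j ji1 l.1.+1 erefl).
  case: (eqVneq (val j) l.1.+1) => [ej'|nj'].
    rewrite -(f_gen_arc (@sc_over_neg n w t ji j lt' sg erefl ej')) IH'.
    by rewrite (@insubd_eq n j ji l.1 erefl).
  by rewrite -(f_gen_arc (@sc_straight n w t j lt' nj nj')) IH'.
Qed.

Lemma hom_fixed : braid_map op opinv v w x0 = x0.
Proof.
apply/funext => j.
have := hom_gen (leqnn (size w)) j; rewrite take_size => <-.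
have -> : (inord (size w) : 'I_(size w).+1) = ord_max by apply: val_inj; rewrite /= inordK.
by rewrite (f_gen_arc (@sc_close n w j)).
Qed.

Lemma hom_eval (a : fund_kquandle v w) :
  f a = teval op opinv (fun g => segval op opinv v x0 (crepr g)) (crepr a).
Proof.
rewrite -{1}(class_repr a) (hom_teval HQ fhom); congr teval.
apply/funext => g; rewrite -{1}(class_repr g).
case: (crepr g) => t j.
rewrite -[t]inord_val.
rewrite /segval /= inordK ?ltn_ord //.
by rewrite -(hom_gen _ j) // -ltnS ltn_ord.
Qed.
End HomSide.
End Fund.
Section Topo.

Lemma cont2 (Y Z W : topologicalType) (g : Z -> Z -> W) (u1 u2 : Y -> Z) :
  continuous (fun p : Z * Z => g p.1 p.2) -> continuous u1 -> continuous u2 ->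
  continuous (fun y => g (u1 y) (u2 y)).
Proof.
move=> cg c1 c2 y.
apply: (@continuous_comp _ _ _ (fun y => (u1 y, u2 y)) (fun p : Z * Z => g p.1 p.2) y).
  by apply: cvg_pair; [exact: c1 | exact: c2].
exact: cg.
Qed.

Lemma proj_cont (I : eqType) (T : topologicalType) (i : I) :
  continuous (fun y : {ptws I -> T} => y i).
Proof. exact: (@proj_continuous I (fun _ => T) i). Qed.

Lemma to_ptws_cont (X : topologicalType) (I : Type) (T : topologicalType)
  (h : X -> {ptws I -> T}) : (forall i, continuous (fun x => h x i)) -> continuous h.
Proof.
move=> hc x; apply/cvg_sup => i.
move=> U [? /= [[W oW <-]]] /= Wsfz /filterS; apply; apply: (hc i).
exact: open_nbhs_nbhs.
Qed.

Lemma eval_cont (X Y : topologicalType) (a : X) :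
  continuous (fun f : {compact-open, X -> Y} => f a).
Proof.
move=> f U; rewrite /= nbhsE => -[O [oO Ofa] OU].
apply: (@filterS _ _ _ [set g : {compact-open, X -> Y} | g @` [set a] `<=` O]).
  by move=> g /= gO; apply: OU; apply: gO; exists a.
apply: open_nbhs_nbhs; split.
  by apply: compact_open_open => //; exact: compact_set1.
by move=> _ [b -> <-].
Qed.

End Topo.
Section TopoBraid.
Variables (k : nat) (Q : topologicalType) (op opinv : 'I_k -> Q -> Q -> Q).
Hypothesis Hc : forall i : 'I_k,
    continuous (fun p : Q * Q => op i p.1 p.2) /\
    continuous (fun p : Q * Q => opinv i p.1 p.2).
Variables (n : nat) (v : 'I_n -> 'I_k) (w : seq braid_letter).
Local Notation Y := {ptws 'I_n -> Q}.

Lemma step_cont c l : continuous (fun y : Y => (braid_step op opinv c l y : Y)).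
Proof.
apply: to_ptws_cont => j; rewrite /braid_step.
case: l.2; case: (val j == l.1); case: (val j == l.1.+1);
  first [exact: proj_cont
        | apply: cont2; [exact: (Hc _).1 | exact: proj_cont | exact: proj_cont]
        | apply: cont2; [exact: (Hc _).2 | exact: proj_cont | exact: proj_cont]].
Qed.

Lemma braid_cont c w0 : continuous (fun y : Y => (braid_map op opinv c w0 y : Y)).
Proof.
elim: w0 c => [|l w0 IH] c /=; first by move=> y; exact: cvg_id.
move=> y; apply: (@continuous_comp _ _ _ (fun y : Y => (braid_step op opinv c l y : Y))
   (fun y : Y => (braid_map op opinv (swapc l.1 c) w0 y : Y)) y).
  exact: step_cont.
exact: IH.
Qed.

Lemma segval_cont_y (s : segment n w) : continuous (fun y : Y => segval op opinv v y s).
Proof.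
move=> y; apply: (@continuous_comp _ _ _ (fun y : Y => (braid_map op opinv v (take s.1 w) y : Y))
   (fun z : Y => z s.2) y).
  exact: braid_cont.
exact: proj_cont.
Qed.

Lemma teval_cont (t : kterm k (Defs.arc n w)) : continuous (fun y : Y => teval op opinv (@arcval k Q op opinv n v w y) t).
Proof.
elim: t => [g|i a IHa b IHb|i a IHa b IHb] /=.
- exact: segval_cont_y.
- apply: cont2 => //; exact: (Hc i).1.
- apply: cont2 => //; exact: (Hc i).2.
Qed.

Local Notation D := (discrete_topology (fund_kquandle v w)).

Lemma F_cont : continuous (fun p : Y * D => @Gmap k Q op opinv n v w p.1 p.2).
Proof.
case=> y a U /= hU.
have hP := teval_cont (t:=crepr a) hU.
exists ((fun y : Y => teval op opinv (@arcval k Q op opinv n v w y) (crepr a)) @^-1` U, [set a]).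
  split => //; exact: discrete_set1.
by case=> z b /= [Pz ->].
Qed.

Lemma G_cont : continuous (fun y : Y => (@Gmap k Q op opinv n v w y : {compact-open, D -> Q})).
Proof.
exact: (continuous_curry_fun F_cont).
Qed.
End TopoBraid.
Theorem mainTheorem5 (k : nat) (Q : topologicalType)
    (op opinv : 'I_k -> Q -> Q -> Q)
    (HQ : is_topological_kquandle op opinv)
    (n : nat) (v : 'I_n -> 'I_k) (w : seq braid_letter)
    (Hw : valid_word n w)
    (Hcol : forall c : 'I_k, exists j : 'I_n, v j = c)
    (Hclosed : forall j : 'I_n, colors_at v w (size w) j = v j) :
  @homeomorphism_on _ {ptws 'I_n -> Q}
    (@fund_hom_space k Q op n v w)
    (@fixed_points k Q op opinv n v w)
    (fun f j => f (@top_arc k n v w j)).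
Proof.
case: HQ => HQk Hc.
split.
- split.
  + move=> f /= fhom; exact: (hom_fixed HQk Hw fhom).
  + move=> f1 f2 /set_mem h1 /set_mem h2 e.
    apply/funext => a.
    rewrite (hom_eval HQk Hw h1) (hom_eval HQk Hw h2).
    by rewrite e.
  + move=> y /= fy.
    exists (@Gmap k Q op opinv n v w y); first exact: (Gmap_hom HQk fy).
    by apply/funext => j; rewrite (Gmap_top HQk fy).
- apply: continuous_subspaceT; apply: to_ptws_cont => j; exact: eval_cont.
- exists (fun y : {ptws 'I_n -> Q} =>
           (@Gmap k Q op opinv n v w y : {compact-open, discrete_topology (fund_kquandle v w) -> Q})).
  split.
    apply: continuous_subspaceT; exact: (G_cont Hc).
  move=> y fy; split; first exact: (Gmap_hom HQk fy).
  by apply/funext => j; rewrite (Gmap_top HQk fy).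
Qed.
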